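(* Let $X=(X,a)$ be a $\mathsf V$-category, $M\subseteq X$ with full embedding $m:M\hookrightarrow X$, and $x\in X$ (also regarded as the $\mathsf V$-functor $x:E\to X$). The following are equivalent: (i) $x\in\overline M$; (ii) $a(x,x)\le\bigvee_{y\in M}a(x,y)\otimes a(y,x)$; (iii) $k\le\bigvee_{y\in M}a(x,y)\otimes a(y,x)$; (iv) $1_E^*\le x^*\cdot m_*\cdot m^*\cdot x_*$; (v) $m^*\cdot x_*\dashv x^*\cdot m_*$; (vi) $x_*:E\to X$ factors as $x_*=m_*\cdot\varphi$ for some $\mathsf V$-module $\varphi:E\to M$.
   Context: Let $\mathsf V=(\mathsf V,\otimes,k)$ be a commutative unital quantale (complete lattice with commutative associative $\otimes$, neutral element $k$, $u\otimes(-)$ preserving suprema). A $\mathsf V$-category $(X,a)$ is a set with $a:X\times X\to\mathsf V$, $k\le a(x,x)$, $a(x,y)\otimes a(y,z)\le a(x,z)$; a $\mathsf V$-functor $f:(X,a)\to(Y,b)$ satisfies $a(x,y)\le b(f(x),f(y))$; subsets carry the restricted structure. For points, $u\cong v$ in $(Y,b)$ means $k\le b(u,v)$ and $k\le b(v,u)$. The L-closure of $M\subseteq X$ is $\overline M=\{x\in X\mid$ for all $\mathsf V$-functors $f,g:X\to Y$ with $f|_M=g|_M$ one has $f(x)\cong g(x)\}$. $E=(\{\star\},k)$. A $\mathsf V$-relation from $X$ to $Y$ is a map $X\times Y\to\mathsf V$, composed by $(s\cdot r)(x,z)=\bigvee_y r(x,y)\otimes s(y,z)$, ordered pointwise. A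 $\mathsf V$-module $\varphi:(X,a)\to(Y,b)$ is a $\mathsf V$-relation with $\varphi\cdot a\le\varphi$ and $b\cdot\varphi\le\varphi$; the identity module on $X$ is $1_X^*=a$. For a $\mathsf V$-functor $f:Z\to X$, $f_*(z,x)=a(f(z),x)$ and $f^*(x,z)=a(x,f(z))$. For modules $\varphi:A\to B$, $\psi:B\to A$, $\varphi\dashv\psi$ means $1_A^*\le\psi\cdot\varphi$ and $\varphi\cdot\psi\le 1_B^*$. *)

(* Defs.v *)
Record quantale := Quantale {
  qcar :> Type;
  qle : qcar -> qcar -> Prop;
  qsup : (qcar -> Prop) -> qcar;
  qtens : qcar -> qcar -> qcar;
  qk : qcar;
  qle_refl : forall u, qle u u;
  qle_trans : forall u v w, qle u v -> qle v w -> qle u w;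
  qle_antisym : forall u v, qle u v -> qle v u -> u = v;
  qsup_ub : forall (S : qcar -> Prop) u, S u -> qle u (qsup S);
  qsup_least : forall (S : qcar -> Prop) u,
      (forall v, S v -> qle v u) -> qle (qsup S) u;
  qtensC : forall u v, qtens u v = qtens v u;
  qtensA : forall u v w, qtens u (qtens v w) = qtens (qtens u v) w;
  qtens1 : forall u, qtens qk u = u;
  qtens_sup : forall u (S : qcar -> Prop),
      qtens u (qsup S) = qsup (fun w => exists v, S v /\ w = qtens u v)
}.

Arguments qle {q}.
Arguments qsup {q}.
Arguments qtens {q}.
Arguments qk {q}.

Definition qbig {V : quantale} {I : Type} (f : I -> V) : V :=
  qsup (fun v => exists i, v = f i).

Record vcat (V : quantale) := VCat {
  vobj :> Type;
  vhom : vobj -> vobj -> V;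
  vhom_refl : forall x, qle qk (vhom x x);
  vhom_trans : forall x y z, qle (qtens (vhom x y) (vhom y z)) (vhom x z)
}.

Arguments vhom {V} _ _ _.
Arguments vhom_refl {V} _ _.
Arguments vhom_trans {V} _ _ _ _.
Arguments VCat {V} _ _ _ _.

Definition vfunctor {V : quantale} {X Y : vcat V} (f : X -> Y) : Prop :=
  forall x y, qle (vhom X x y) (vhom Y (f x) (f y)).

Definition viso {V : quantale} (Y : vcat V) (u v : Y) : Prop :=
  qle qk (vhom Y u v) /\ qle qk (vhom Y v u).

Definition subcat {V : quantale} (X : vcat V) (M : X -> Prop) : vcat V :=
  @VCat V {y : X | M y}
    (fun y z => vhom X (proj1_sig y) (proj1_sig z))
    (fun y => vhom_refl X (proj1_sig y))
    (fun y z w => vhom_trans X (proj1_sig y) (proj1_sig z) (proj1_sig w)).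


Definition incl {V : quantale} {X : vcat V} (M : X -> Prop) :
  subcat X M -> X := fun y => proj1_sig y.

Definition Ecat (V : quantale) : vcat V :=
  @VCat V unit (fun _ _ => qk)
    (fun _ => qle_refl V qk)
    (fun _ _ _ => eq_ind_r (fun t => qle t qk) (qle_refl V qk) (qtens1 V qk)).

Definition Lclosure {V : quantale} {X : vcat V} (M : X -> Prop) (x : X) : Prop :=
  forall (Y : vcat V) (f g : X -> Y), vfunctor f -> vfunctor g ->
    (forall y, M y -> f y = g y) -> viso Y (f x) (g x).

Definition vrel (V : quantale) (A B : Type) := A -> B -> V.

Definition rcomp {V : quantale} {A B C : Type} (s : vrel V B C) (r : vrel V A B)
  : vrel V A C :=
  fun x z => qbig (fun y : B => qtens (r x y) (s y z)).

Definition rle {V : quantale} {A B : Type} (r s : vrel V A B) : Prop :=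
  forall x y, qle (r x y) (s x y).

Definition vmodule {V : quantale} {X Y : vcat V} (phi : vrel V X Y) : Prop :=
  rle (rcomp phi (vhom X)) phi /\ rle (rcomp (vhom Y) phi) phi.

Definition idmod {V : quantale} (X : vcat V) : vrel V X X := vhom X.

(** f_* (z,x) = a(f z, x) and f^* (x,z) = a(x, f z) for f : Z -> X *)
Definition lower {V : quantale} {Z : Type} {X : vcat V} (f : Z -> X) : vrel V Z X :=
  fun z x => vhom X (f z) x.
Definition upper {V : quantale} {Z : Type} {X : vcat V} (f : Z -> X) : vrel V X Z :=
  fun x z => vhom X x (f z).

Definition madj {V : quantale} {A B : vcat V} (phi : vrel V A B) (psi : vrel V B A)
  : Prop :=
  rle (idmod A) (rcomp psi phi) /\ rle (rcomp phi psi) (idmod B).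

(* Main.v *)
Require Import Defs.
From Stdlib Require Import ClassicalEpsilon FunctionalExtensionality PropExtensionality.

Section Q.
Variable V : quantale.

Lemma le_refl (u : V) : qle u u. Proof. apply qle_refl. Qed.
Lemma le_tr (u v w : V) : qle u v -> qle v w -> qle u w. Proof. apply qle_trans. Qed.

Lemma big_ub {I} (f : I -> V) i : qle (f i) (qbig f).
Proof. apply qsup_ub. eauto. Qed.
Lemma big_least {I} (f : I -> V) u : (forall i, qle (f i) u) -> qle (qbig f) u.
Proof. intros H. apply qsup_least. intros v [i ->]. auto. Qed.
Lemma big_mono {I} (f g : I -> V) : (forall i, qle (f i) (g i)) -> qle (qbig f) (qbig g).
Proof. intros H. apply big_least. intros i. eapply le_tr; [apply H|apply big_ub]. Qed.

Lemma tens_big (u : V) {I} (f : I -> V) : qtens u (qbig f) = qbig (fun i => qtens u (f i)).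
Proof.
  unfold qbig. rewrite qtens_sup. apply qle_antisym.
  - apply qsup_least. intros w [v [[i ->] ->]]. apply qsup_ub. eauto.
  - apply qsup_least. intros w [i ->]. apply qsup_ub. eauto.
Qed.
Lemma big_tens (u : V) {I} (f : I -> V) : qtens (qbig f) u = qbig (fun i => qtens (f i) u).
Proof.
  rewrite qtensC, tens_big. f_equal. apply functional_extensionality. intros. apply qtensC.
Qed.

Lemma tens_monor (u v v' : V) : qle v v' -> qle (qtens u v) (qtens u v').
Proof.
  intros H.
  assert (E : qsup (fun w => w = v \/ w = v') = v').
  { apply qle_antisym. apply qsup_least. intros w [->| ->]; auto using le_refl.
    apply qsup_ub. auto. }
  rewrite <- E. rewrite qtens_sup. apply qsup_ub. eauto.
Qed.
Lemma tens_mono (u u' v v' : V) : qle u u' -> qle v v' -> qle (qtens u v) (qtens u' v').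
Proof.
  intros H1 H2. eapply le_tr. apply tens_monor, H2.
  rewrite (qtensC _ u), (qtensC _ u'). apply tens_monor, H1.
Qed.

Lemma big_unit (c : V) : qbig (fun _ : unit => c) = c.
Proof. apply qle_antisym. apply big_least; auto using le_refl. apply (big_ub (fun _ : unit => c) tt). Qed.

Lemma tens1r (u : V) : qtens u qk = u. Proof. rewrite qtensC. apply qtens1. Qed.
End Q.

Section C.
Variable V : quantale.
Variable X : vcat V.

Lemma yon (u v : X) : qbig (fun w => qtens (vhom X u w) (vhom X w v)) = vhom X u v.
Proof.
  apply qle_antisym. apply big_least. intros; apply vhom_trans.
  eapply le_tr; [|apply (big_ub _ (fun w => qtens (vhom X u w) (vhom X w v)) v)].
  rewrite <- (tens1r _ (vhom X u v)) at 1. apply tens_mono. apply le_refl. apply vhom_refl.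
Qed.

Lemma tr3 (u v w z : X) : qle (qtens (qtens (vhom X u v) (vhom X v w)) (vhom X w z)) (vhom X u z).
Proof. eapply le_tr. apply tens_mono. apply vhom_trans. apply le_refl. apply vhom_trans. Qed.
End C.
Section Y.
Variable V : quantale.
Variable X : vcat V.
Variable M : X -> Prop.

Definition SS (u v : X) : V :=
  qbig (fun y : {y : X | M y} => qtens (vhom X u (proj1_sig y)) (vhom X (proj1_sig y) v)).

Lemma SS_le (u v : X) : qle (SS u v) (vhom X u v).
Proof. apply big_least. intros; apply vhom_trans. Qed.

Lemma SS_l (u v w : X) : qle (qtens (vhom X u v) (SS v w)) (SS u w).
Proof.
  unfold SS. rewrite tens_big. apply big_mono. intros [y Hy]; simpl.
  rewrite qtensA. apply tens_mono. apply vhom_trans. apply le_refl.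
Qed.
Lemma SS_r (u v w : X) : qle (qtens (SS u v) (vhom X v w)) (SS u w).
Proof.
  unfold SS. rewrite big_tens. apply big_mono. intros [y Hy]; simpl.
  rewrite <- qtensA. apply tens_mono. apply le_refl. apply vhom_trans.
Qed.
Lemma SS_SS (u v w : X) : qle (qtens (SS u v) (SS v w)) (vhom X u w).
Proof. eapply le_tr. apply tens_mono; apply SS_le. apply vhom_trans. Qed.

Definition Yh (p q : X * bool) : V :=
  if Bool.eqb (snd p) (snd q) then vhom X (fst p) (fst q) else SS (fst p) (fst q).

Lemma Yh_refl p : qle qk (Yh p p).
Proof. destruct p as [u []]; simpl; apply vhom_refl. Qed.
Lemma Yh_trans p q r : qle (qtens (Yh p q) (Yh q r)) (Yh p r).
Proof.
  destruct p as [u []], q as [v []], r as [w []]; unfold Yh; simpl;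
  first [apply vhom_trans | apply SS_l | apply SS_r | apply SS_SS].
Qed.

Definition Ycat : vcat V := VCat (X * bool) Yh Yh_refl Yh_trans.

Definition bb (z : X) : bool := if excluded_middle_informative (M z) then false else true.
End Y.
Lemma le_t1 (V : quantale) (u : V) : qle u (qtens u qk).
Proof. rewrite tens1r. apply le_refl. Qed.
Lemma le_1t (V : quantale) (u : V) : qle u (qtens qk u).
Proof. rewrite qtens1. apply le_refl. Qed.

Theorem mainTheorem6 (V : quantale) (X : vcat V) (M : X -> Prop) (x : X) :
  let Mc := subcat X M in
  let m : Mc -> X := incl M in
  let xE : Ecat V -> X := fun _ => x in
  let xs := lower xE in
  let xu := upper xE in
  let ms := lower m in
  let mu := upper m in
  let i := Lclosure M x in
  let ii := qle (vhom X x x)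
              (qbig (fun y : Mc => qtens (vhom X x (m y)) (vhom X (m y) x))) in
  let iii := qle qk
              (qbig (fun y : Mc => qtens (vhom X x (m y)) (vhom X (m y) x))) in
  let iv := rle (idmod (Ecat V)) (rcomp xu (rcomp ms (rcomp mu xs))) in
  let v := @madj V (Ecat V) Mc (rcomp mu xs) (rcomp xu ms) in
  let vi := exists phi : vrel V (Ecat V) Mc,
              vmodule phi /\ xs = rcomp ms phi in
  (i <-> ii) /\ (i <-> iii) /\ (i <-> iv) /\ (i <-> v) /\ (i <-> vi).
Proof.
  intros Mc m xE xs xu ms mu i ii iii iv v vi.
  assert (Emx : rcomp mu xs = fun _ y => vhom X x (m y)).
  { extensionality e; extensionality y. exact (yon V X x (m y)). }
  assert (Exm : rcomp xu ms = fun y _ => vhom X (m y) x).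
  { extensionality y; extensionality e. exact (yon V X (m y) x). }
  assert (H13 : i <-> iii).
  { split.
    - intro Hi. destruct (excluded_middle_informative (M x)) as [Hx|Hx].
      + unfold iii. eapply le_tr; [| apply (big_ub _ _ (exist (fun y => M y) x Hx : Mc))].
        cbn. eapply le_tr. apply le_1t. apply tens_mono; apply vhom_refl.
      + specialize (Hi (Ycat V X M) (fun z => (z,false)) (fun z => (z, bb V X M z))).
        destruct Hi as [H1 _].
        * intros z w. unfold Yh; simpl. apply le_refl.
        * intros z w. cbn. unfold Yh, bb; simpl.
          destruct (excluded_middle_informative (M z)) as [Hz|Hz],
                   (excluded_middle_informative (M w)) as [Hw|Hw]; simpl; try apply le_refl.
          -- eapply le_tr; [|apply (big_ub _ _ (exist (fun y => M y) z Hz))]. cbn.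
             eapply le_tr. apply le_1t. apply tens_mono; [apply vhom_refl|apply le_refl].
          -- eapply le_tr; [|apply (big_ub _ _ (exist (fun y => M y) w Hw))]. cbn.
             eapply le_tr. apply le_t1. apply tens_mono; [apply le_refl|apply vhom_refl].
        * intros y Hy. unfold bb. destruct (excluded_middle_informative (M y)); [reflexivity|contradiction].
        * cbn in H1. unfold Yh, bb in H1. destruct (excluded_middle_informative (M x)); [contradiction|].
          simpl in H1. exact H1.
    - intros H Y f g Hf Hg Hfg. split.
      + eapply le_tr. apply H. apply big_least. intros [y Hy]. cbn.
        eapply le_tr. apply tens_mono. apply Hf. apply Hg. rewrite (Hfg y Hy). apply vhom_trans.
      + eapply le_tr. apply H. apply big_least. intros [y Hy]. cbn.
        eapply le_tr. apply tens_mono. apply Hg. apply Hf. rewrite (Hfg y Hy). apply vhom_trans. }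
  assert (H23 : ii <-> iii).
  { split.
    - intro H. eapply le_tr. apply vhom_refl. exact H.
    - intro H. unfold ii. eapply le_tr. apply le_t1. eapply le_tr. apply tens_monor, H.
      rewrite tens_big. apply big_mono. intros y. rewrite qtensA.
      apply tens_mono; [apply vhom_trans|apply le_refl]. }
  assert (H34 : iii <-> iv).
  { unfold iv. rewrite Emx. split.
    - intros H [] []. unfold idmod, rcomp. cbn. eapply le_tr. apply H.
      eapply le_tr; [|apply (big_ub _ _ x)]. cbn.
      eapply le_tr. apply le_t1. apply tens_mono; [apply le_refl|apply vhom_refl].
    - intros H. specialize (H tt tt). eapply le_tr. apply H.
      apply big_least. intros z. unfold ms, lower. unfold rcomp, xu, upper, xE. rewrite big_tens. apply big_mono.
      intros y. rewrite <- qtensA. apply tens_mono; [apply le_refl|apply vhom_trans]. }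
  assert (H35 : iii <-> v).
  { unfold v, madj. rewrite Emx, Exm. split.
    - intros H. split.
      + intros [] []. exact H.
      + intros y y'. apply big_least. intros. exact (vhom_trans X (m y) x (m y')).
    - intros [H _]. exact (H tt tt). }
  assert (H36 : iii <-> vi).
  { split.
    - intros H. exists (rcomp mu xs). rewrite Emx. split. split.
      + intros e y. apply big_least. intros e'. cbn. rewrite qtens1. apply le_refl.
      + intros e y'. apply big_least. intros y. exact (vhom_trans X x (m y) (m y')).
      + extensionality e; extensionality z. apply qle_antisym.
        * unfold xs, lower, rcomp, xE. eapply le_tr. apply le_1t. eapply le_tr.
          apply tens_mono. apply H. apply le_refl. rewrite big_tens. apply big_mono.
          intros y. rewrite <- qtensA. apply tens_mono; [apply le_refl|apply vhom_trans].
        * apply big_least. intros y. apply vhom_trans.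
    - intros [phi [_ Hphi]].
      assert (Hp : forall y, qle (phi tt y) (vhom X x (m y))).
      { intros y. assert (E1 := f_equal (fun r => r tt (m y)) Hphi). cbn in E1.
        change (vhom X x (m y)) with (xs tt (m y)). rewrite Hphi.
        eapply le_tr; [|apply (big_ub _ _ y)]. cbn.
        eapply le_tr. apply le_t1. apply tens_mono; [apply le_refl|apply vhom_refl]. }
      assert (E1 := f_equal (fun r => r tt x) Hphi). cbn in E1.
      unfold iii. eapply le_tr. apply (vhom_refl X x). change (vhom X x x) with (xs tt x).
      rewrite Hphi. apply big_mono. intros y. apply tens_mono; [apply Hp|apply le_refl]. }
  clearbody i ii iii iv v vi. clear Emx Exm.
  repeat split; tauto.
Qed.
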